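(* $\nabla\varphi(U)=\mathbb{R}^2\setminus\bigcup_{i=1}^n C_{p_i}$.
   Context: $n\ge3$; $p_1,\dots,p_n\in\mathbb{R}^2_{(u_1,u_2)}$ are distinct vertices, in counterclockwise order, of a convex polygon with interior $U$; indices mod $n$. $A\ge0$, $V(u)=A+\sum_i\frac{1}{2|u-p_i|}$. For $b_1,\dots,b_n\in\mathbb{R}$, $\varphi:\overline U\to\mathbb{R}$ is the unique continuous convex function, smooth in $U$, with $\det D^2\varphi=V$ in $U$, $\varphi(p_i)=b_i$, and $\varphi$ affine linear on each edge $[p_i,p_{i+1}]$. The subgradient set at a vertex is $C_{p_i}=\{y\in\mathbb{R}^2:\varphi(u)-\varphi(p_i)\ge\langle y,u-p_i\rangle\ \forall u\in\overline U\}$. *)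

(* Defs.v *)
From Stdlib Require Import Reals Lra Lia List.
From Coquelicot Require Import Coquelicot.
Open Scope R_scope.

Definition pt := (R * R)%type.

Fixpoint sumR (n : nat) (f : nat -> R) : R :=
  match n with O => 0 | S m => sumR m f + f m end.

Definition cross (a b : pt) : R := fst a * snd b - snd a * fst b.
Definition psub (a b : pt) : pt := (fst a - fst b, snd a - snd b).
Definition dot (a b : pt) : R := fst a * fst b + snd a * snd b.
Definition enorm (a : pt) : R := sqrt (fst a ^ 2 + snd a ^ 2).
Definition comb (t : R) (a b : pt) : pt :=
  ((1 - t) * fst a + t * fst b, (1 - t) * snd a + t * snd b).

Definition vert (p : nat -> pt) (n i : nat) : pt := p (Nat.modulo i n).

(* p 0..p(n-1) are distinct vertices, in counterclockwise order, of a convex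
   polygon: every other vertex lies strictly to the left of each directed edge. *)
Definition ccw_convex_polygon (n : nat) (p : nat -> pt) : Prop :=
  (forall i j, (i < n)%nat -> (j < n)%nat -> i <> j -> p i <> p j) /\
  (forall i j, (i < n)%nat -> (j < n)%nat -> j <> i -> j <> Nat.modulo (S i) n ->
     cross (psub (vert p n (S i)) (p i)) (psub (p j) (p i)) > 0).

Definition poly_int (n : nat) (p : nat -> pt) (u : pt) : Prop :=
  forall i, (i < n)%nat -> cross (psub (vert p n (S i)) (p i)) (psub u (p i)) > 0.
Definition poly_cl (n : nat) (p : nat -> pt) (u : pt) : Prop :=
  forall i, (i < n)%nat -> cross (psub (vert p n (S i)) (p i)) (psub u (p i)) >= 0.

(* partial derivatives: true = d/du1, false = d/du2 *)
Definition partial (b : bool) (f : pt -> R) : pt -> R :=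
  fun u => if b then Derive (fun t => f (t, snd u)) (fst u)
           else Derive (fun t => f (fst u, t)) (snd u).

Fixpoint iter_partial (l : list bool) (f : pt -> R) : pt -> R :=
  match l with nil => f | b :: l' => partial b (iter_partial l' f) end.

Definition smooth_on (S : pt -> Prop) (f : pt -> R) : Prop :=
  forall (l : list bool) (u : pt), S u ->
    ex_derive (fun t => iter_partial l f (t, snd u)) (fst u) /\
    ex_derive (fun t => iter_partial l f (fst u, t)) (snd u) /\
    continuous (iter_partial l f) u.

Definition grad (f : pt -> R) (u : pt) : pt := (partial true f u, partial false f u).

Definition hess_det (f : pt -> R) (u : pt) : R :=
  partial true (partial true f) u * partial false (partial false f) u
  - partial true (partial false f) u * partial false (partial true f) u.

Definition Vpot (A : R) (n : nat) (p : nat -> pt) (u : pt) : R :=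
  A + sumR n (fun i => 1 / (2 * enorm (psub u (p i)))).

Definition convex_on (S : pt -> Prop) (f : pt -> R) : Prop :=
  forall x y t, S x -> S y -> 0 <= t <= 1 ->
    f (comb t x y) <= (1 - t) * f x + t * f y.

Definition cont_within_on (S : pt -> Prop) (f : pt -> R) : Prop :=
  forall u, S u -> filterlim f (within S (locally u)) (locally (f u)).

Definition affine_on_segment (f : pt -> R) (a b : pt) : Prop :=
  exists (c : pt) (d : R), forall t, 0 <= t <= 1 ->
    f (comb t a b) = dot c (comb t a b) + d.

Definition subgrad (S : pt -> Prop) (f : pt -> R) (q : pt) (y : pt) : Prop :=
  forall u, S u -> f u - f q >= dot y (psub u q).

(* Main.v *)
Require Import Defs.
From Stdlib Require Import Reals Lra Lia List Classical FunctionalExtensionality ClassicalEpsilon.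
From Coquelicot Require Import Coquelicot.
Open Scope R_scope.

Definition nxt (n i : nat) : nat := Nat.modulo (S i) n.
Definition prv (n k : nat) : nat := Nat.modulo (k + n - 1) n.

Lemma nxt_cases n i : (i < n)%nat ->
  ((S i < n)%nat /\ nxt n i = S i) \/ (S i = n /\ nxt n i = 0%nat).
Proof.
  intros Hi. unfold nxt. destruct (Nat.eq_dec (S i) n) as [E|E].
  - right. split; auto. symmetry. apply (Nat.mod_unique _ _ 1); lia.
  - left. split; [lia|]. apply Nat.mod_small; lia.
Qed.

Lemma prv_cases n k : (k < n)%nat ->
  (k = 0%nat /\ prv n k = (n - 1)%nat) \/ ((0 < k)%nat /\ prv n k = (k - 1)%nat).
Proof.
  intros Hk. unfold prv. destruct k as [|k].
  - left. split; auto. apply Nat.mod_small; lia.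
  - right. split; [lia|]. symmetry. apply (Nat.mod_unique _ _ 1); lia.
Qed.

Lemma nxt_lt n i : (i < n)%nat -> (nxt n i < n)%nat.
Proof. intros H; destruct (nxt_cases n i H) as [[? ->]|[? ->]]; lia. Qed.
Lemma prv_lt n k : (k < n)%nat -> (prv n k < n)%nat.
Proof. intros H; destruct (prv_cases n k H) as [[? ->]|[? ->]]; lia. Qed.
Lemma nxt_prv n k : (k < n)%nat -> nxt n (prv n k) = k.
Proof. intros H. pose proof (prv_lt n k H) as H'.
  destruct (prv_cases n k H) as [[? E]|[? E]]; rewrite E in *;
  destruct (nxt_cases n _ H') as [[? ->]|[? ->]]; lia. Qed.
Lemma prv_neq n k : (2 <= n)%nat -> (k < n)%nat -> prv n k <> k.
Proof. intros Hn H; destruct (prv_cases n k H) as [[? ->]|[? ->]]; lia. Qed.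
Lemma prv_neq_nxt n k : (3 <= n)%nat -> (k < n)%nat -> prv n k <> nxt n k.
Proof. intros Hn H; destruct (prv_cases n k H) as [[? ->]|[? ->]];
  destruct (nxt_cases n k H) as [[? ->]|[? ->]]; lia. Qed.
Lemma nxt_neq n i : (2 <= n)%nat -> (i < n)%nat -> nxt n i <> i.
Proof. intros Hn H; destruct (nxt_cases n i H) as [[? ->]|[? ->]]; lia. Qed.
Lemma nxt_nxt_neq n i : (3 <= n)%nat -> (i < n)%nat -> nxt n (nxt n i) <> i.
Proof. intros Hn H. pose proof (nxt_lt n i H) as H'.
  destruct (nxt_cases n i H) as [[? E]|[? E]]; rewrite E in *;
  destruct (nxt_cases n _ H') as [[? ->]|[? ->]]; lia. Qed.

Lemma abs_le x y : Rabs x <= y -> - y <= x <= y.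
Proof. unfold Rabs; destruct (Rcase_abs x); intros; lra. Qed.

Lemma cross_comb e q s x y :
  cross e (psub (comb s x y) q) = (1 - s) * cross e (psub x q) + s * cross e (psub y q).
Proof. unfold cross, psub, comb; simpl; ring. Qed.

Lemma cross_pert E q w t e :
  Rabs (fst w - fst t) < e -> Rabs (snd w - snd t) < e ->
  Rabs (cross E (psub w q) - cross E (psub t q)) <= (Rabs (fst E) + Rabs (snd E)) * e.
Proof.
  intros H1 H2.
  replace (cross E (psub w q) - cross E (psub t q)) with
    (fst E * (snd w - snd t) + - (snd E * (fst w - fst t)))
    by (unfold cross, psub; simpl; ring).
  eapply Rle_trans; [apply Rabs_triang|]. rewrite Rabs_Ropp, !Rabs_mult.
  pose proof (Rabs_pos (fst E)); pose proof (Rabs_pos (snd E)).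
  assert (Rabs (fst E) * Rabs (snd w - snd t) <= Rabs (fst E) * e)
    by (apply Rmult_le_compat_l; lra).
  assert (Rabs (snd E) * Rabs (fst w - fst t) <= Rabs (snd E) * e)
    by (apply Rmult_le_compat_l; lra).
  lra.
Qed.

Lemma finite_pos_min (n : nat) (f : nat -> R) :
  (forall j, (j < n)%nat -> 0 < f j) ->
  exists d, 0 < d /\ forall j, (j < n)%nat -> d <= f j.
Proof.
  induction n as [|n IH]; intros H.
  - exists 1; split; [lra|]; intros; lia.
  - destruct IH as [d [Hd Hj]]; [intros; apply H; lia|].
    exists (Rmin d (f n)). split.
    + apply Rmin_glb_lt; [exact Hd| apply H; lia].
    + intros j Hj'. destruct (Nat.eq_dec j n) as [E|Ne].
      * rewrite E; apply Rmin_r.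
      * eapply Rle_trans; [apply Rmin_l| apply Hj; lia].
Qed.

Definition Edge n p j := psub (vert p n (S j)) (p j).

Lemma int_open n p u : poly_int n p u ->
  exists d, 0 < d /\ forall w, Rabs (fst w - fst u) < d -> Rabs (snd w - snd u) < d ->
    poly_int n p w.
Proof.
  intros Hu.
  destruct (finite_pos_min n (fun j => cross (Edge n p j) (psub u (p j)) /
     (Rabs (fst (Edge n p j)) + Rabs (snd (Edge n p j)) + 1))) as [d [Hd Hdj]].
  { intros j Hj. pose proof (Rabs_pos (fst (Edge n p j))); pose proof (Rabs_pos (snd (Edge n p j))).
    apply Rdiv_lt_0_compat; [apply Hu; auto| lra]. }
  exists d; split; auto. intros w H1 H2 j Hj.
  specialize (Hdj j Hj). specialize (Hu j Hj).
  pose proof (cross_pert (Edge n p j) (p j) w u d H1 H2) as Hp. apply abs_le in Hp.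
  unfold Edge in *.
  set (X := cross (psub (vert p n (S j)) (p j)) (psub u (p j))) in *.
  set (S0 := Rabs (fst (psub (vert p n (S j)) (p j))) + Rabs (snd (psub (vert p n (S j)) (p j)))) in *.
  assert (HS : 0 <= S0) by (unfold S0; pose proof (Rabs_pos (fst (psub (vert p n (S j)) (p j)))); pose proof (Rabs_pos (snd (psub (vert p n (S j)) (p j)))); lra).
  assert (d * (S0 + 1) <= X).
  { replace X with (X / (S0 + 1) * (S0 + 1)) by (field; lra).
    apply Rmult_le_compat_r; lra. }
  nra.
Qed.

Lemma cl_closed n p t : ~ poly_cl n p t ->
  exists d, 0 < d /\ forall w, Rabs (fst w - fst t) < d -> Rabs (snd w - snd t) < d ->
    ~ poly_cl n p w.
Proof.
  intros Ht. unfold poly_cl in Ht. apply not_all_ex_not in Ht. destruct Ht as [j Hj].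
  apply imply_to_and in Hj. destruct Hj as [Hj Hneg]. apply Rnot_ge_lt in Hneg.
  set (E := psub (vert p n (S j)) (p j)) in *.
  set (X := cross E (psub t (p j))) in *.
  set (S0 := Rabs (fst E) + Rabs (snd E)).
  assert (HS : 0 <= S0) by (unfold S0; pose proof (Rabs_pos (fst E)); pose proof (Rabs_pos (snd E)); lra).
  exists (- X / (S0 + 1)). split.
  { apply Rdiv_lt_0_compat; lra. }
  intros w H1 H2 Hw. specialize (Hw j Hj). fold E in Hw.
  pose proof (cross_pert E (p j) w t _ H1 H2) as Hp. apply abs_le in Hp.
  fold S0 in Hp. fold X in Hp.
  assert (- X / (S0 + 1) * S0 < - X).
  { replace (-X) with (- X / (S0+1) * (S0+1)) at 2 by (field; lra).
    assert (0 < - X / (S0 + 1)) by (apply Rdiv_lt_0_compat; lra). nra. }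
  lra.
Qed.
Lemma int_cl n p u : poly_int n p u -> poly_cl n p u.
Proof. intros H j Hj. left. apply H; auto. Qed.

Lemma vert_cl n p i : (3 <= n)%nat -> ccw_convex_polygon n p -> (i < n)%nat -> poly_cl n p (p i).
Proof.
  intros Hn [Hd Hc] Hi j Hj.
  destruct (Nat.eq_dec i j) as [E|E].
  - subst. right. unfold cross, psub; simpl; ring.
  - destruct (Nat.eq_dec i (Nat.modulo (S j) n)) as [E2|E2].
    + right. unfold vert. rewrite <- E2. unfold cross, psub; simpl; ring.
    + apply Rgt_ge. apply Hc; auto.
Qed.

Lemma cl_comb n p x y s : poly_cl n p x -> poly_cl n p y -> 0 <= s <= 1 -> poly_cl n p (comb s x y).
Proof.
  intros Hx Hy Hs j Hj. rewrite cross_comb. specialize (Hx j Hj). specialize (Hy j Hj).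
  apply Rle_ge. apply Rge_le in Hx. apply Rge_le in Hy.
  apply Rplus_le_le_0_compat; apply Rmult_le_pos; lra.
Qed.

Lemma int_comb n p x y s : poly_int n p x -> poly_cl n p y -> 0 <= s < 1 -> poly_int n p (comb s x y).
Proof.
  intros Hx Hy Hs j Hj. rewrite cross_comb. specialize (Hx j Hj). specialize (Hy j Hj).
  apply Rge_le in Hy.
  assert (0 < (1 - s) * cross (psub (vert p n (S j)) (p j)) (psub x (p j))) by (apply Rmult_lt_0_compat; lra).
  assert (0 <= s * cross (psub (vert p n (S j)) (p j)) (psub y (p j))) by (apply Rmult_le_pos; lra).
  lra.
Qed.

Lemma int_not_vert n p u i : poly_int n p u -> (i < n)%nat -> u <> p i.
Proof.
  intros Hu Hi E. specialize (Hu i Hi). rewrite E in Hu. unfold cross, psub in Hu; simpl in Hu. lra.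
Qed.

Lemma cone n p k u : (3 <= n)%nat -> ccw_convex_polygon n p -> (k < n)%nat -> poly_cl n p u ->
  exists al be, 0 <= al /\ 0 <= be /\
    fst u - fst (p k) = al * (fst (p (nxt n k)) - fst (p k)) + be * (fst (p (prv n k)) - fst (p k)) /\
    snd u - snd (p k) = al * (snd (p (nxt n k)) - snd (p k)) + be * (snd (p (prv n k)) - snd (p k)).
Proof.
  intros Hn [Hd Hc] Hk Hu.
  assert (Hab : cross (psub (p (nxt n k)) (p k)) (psub (p (prv n k)) (p k)) > 0).
  { apply (Hc k (prv n k)); auto. apply prv_lt; auto. apply prv_neq; auto; lia.
    apply prv_neq_nxt; auto. }
  pose proof (Hu k Hk) as H1. change (vert p n (S k)) with (p (nxt n k)) in H1.
  pose proof (Hu (prv n k) (prv_lt n k Hk)) as H2.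
  change (vert p n (S (prv n k))) with (p (nxt n (prv n k))) in H2.
  rewrite nxt_prv in H2 by auto.
  set (a1 := fst (p (nxt n k)) - fst (p k)) in *.
  set (a2 := snd (p (nxt n k)) - snd (p k)) in *.
  set (b1 := fst (p (prv n k)) - fst (p k)) in *.
  set (b2 := snd (p (prv n k)) - snd (p k)) in *.
  set (w1 := fst u - fst (p k)). set (w2 := snd u - snd (p k)).
  set (C := a1 * b2 - a2 * b1).
  assert (HC : C > 0) by (unfold C, a1, a2, b1, b2; unfold cross, psub in Hab; simpl in Hab; lra).
  assert (H1' : a1 * w2 - a2 * w1 >= 0) by (unfold a1, a2, w1, w2; unfold cross, psub in H1; simpl in H1; lra).
  assert (H2' : w1 * b2 - w2 * b1 >= 0).
  { unfold w1, w2, b1, b2; unfold cross, psub in H2; simpl in H2; nra. }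
  exists ((w1 * b2 - w2 * b1) / C), ((a1 * w2 - a2 * w1) / C).
  split; [|split; [|split]].
  - unfold Rdiv; apply Rmult_le_pos; [lra| left; apply Rinv_0_lt_compat; lra].
  - unfold Rdiv; apply Rmult_le_pos; [lra| left; apply Rinv_0_lt_compat; lra].
  - fold w1. unfold C. field. fold C. lra.
  - fold w2. unfold C. field. fold C. lra.
Qed.

Lemma argmax (n : nat) (f : nat -> R) : (0 < n)%nat ->
  exists k, (k < n)%nat /\ forall j, (j < n)%nat -> f j <= f k.
Proof.
  induction n as [|n IH]; intros Hn; [lia|].
  destruct (Nat.eq_dec n 0) as [E|E].
  - subst. exists 0%nat. split; [lia|]. intros j Hj. replace j with 0%nat by lia. lra.
  - destruct IH as [k [Hk Hkj]]; [lia|].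
    destruct (Rle_dec (f n) (f k)) as [L|L].
    + exists k. split; [lia|]. intros j Hj. destruct (Nat.eq_dec j n) as [->|N]; auto. apply Hkj; lia.
    + exists n. split; [lia|]. intros j Hj. destruct (Nat.eq_dec j n) as [->|N]; [lra|].
      specialize (Hkj j ltac:(lia)). lra.
Qed.

Lemma cl_bound n p c : (3 <= n)%nat -> ccw_convex_polygon n p ->
  exists M, forall u, poly_cl n p u -> dot c u <= M.
Proof.
  intros Hn Hp. destruct (argmax n (fun j => dot c (p j))) as [k [Hk Hkj]]; [lia|].
  exists (dot c (p k)). intros u Hu.
  destruct (cone n p k u Hn Hp Hk Hu) as [al [be [Ha [Hb [E1 E2]]]]].
  pose proof (Hkj (nxt n k) (nxt_lt n k Hk)) as Q1.
  pose proof (Hkj (prv n k) (prv_lt n k Hk)) as Q2.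
  unfold dot in *.
  assert (Hd : fst c * fst u + snd c * snd u - (fst c * fst (p k) + snd c * snd (p k)) =
     al * ((fst c * fst (p (nxt n k)) + snd c * snd (p (nxt n k))) - (fst c * fst (p k) + snd c * snd (p k)))
     + be * ((fst c * fst (p (prv n k)) + snd c * snd (p (prv n k))) - (fst c * fst (p k) + snd c * snd (p k)))).
  { replace (fst u) with (fst (p k) + (fst u - fst (p k))) by ring.
    replace (snd u) with (snd (p k) + (snd u - snd (p k))) by ring.
    rewrite E1, E2. ring. }
  assert (al * ((fst c * fst (p (nxt n k)) + snd c * snd (p (nxt n k))) - (fst c * fst (p k) + snd c * snd (p k))) <= 0)
    by (apply Rmult_le_0_l; lra).
  assert (be * ((fst c * fst (p (prv n k)) + snd c * snd (p (prv n k))) - (fst c * fst (p k) + snd c * snd (p k))) <= 0)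
    by (apply Rmult_le_0_l; lra).
  lra.
Qed.

Lemma cl_box n p : (3 <= n)%nat -> ccw_convex_polygon n p ->
  exists a b c d, forall u, poly_cl n p u -> a <= fst u <= b /\ c <= snd u <= d.
Proof.
  intros Hn Hp.
  destruct (cl_bound n p (1,0) Hn Hp) as [M1 H1].
  destruct (cl_bound n p (-1,0) Hn Hp) as [M2 H2].
  destruct (cl_bound n p (0,1) Hn Hp) as [M3 H3].
  destruct (cl_bound n p (0,-1) Hn Hp) as [M4 H4].
  exists (-M2), M1, (-M4), M3. intros u Hu.
  specialize (H1 u Hu); specialize (H2 u Hu); specialize (H3 u Hu); specialize (H4 u Hu).
  unfold dot in *; simpl in *. lra.
Qed.

Lemma on_edge n p i v : (3 <= n)%nat -> ccw_convex_polygon n p -> (i < n)%nat ->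
  poly_cl n p v -> ~ (cross (psub (p (nxt n i)) (p i)) (psub v (p i)) > 0) ->
  exists t, 0 <= t <= 1 /\ v = comb t (p i) (p (nxt n i)).
Proof.
  intros Hn Hp Hi Hv Hx.
  pose proof (Hv i Hi) as Hge. change (vert p n (S i)) with (p (nxt n i)) in Hge.
  destruct (cone n p i v Hn Hp Hi Hv) as [al [be [Ha [Hb [E1 E2]]]]].
  destruct Hp as [Hd Hc].
  assert (Hab : cross (psub (p (nxt n i)) (p i)) (psub (p (prv n i)) (p i)) > 0).
  { apply (Hc i (prv n i)); auto. apply prv_lt; auto. apply prv_neq; auto; lia.
    apply prv_neq_nxt; auto. }
  assert (Hj : (nxt n i < n)%nat) by (apply nxt_lt; auto).
  assert (Hq : cross (psub (p (nxt n (nxt n i))) (p (nxt n i))) (psub (p i) (p (nxt n i))) > 0).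
  { apply (Hc (nxt n i) i); auto. apply not_eq_sym, nxt_neq; auto; lia.
    apply not_eq_sym, nxt_nxt_neq; auto. }
  pose proof (Hv (nxt n i) Hj) as Hge2. change (vert p n (S (nxt n i))) with (p (nxt n (nxt n i))) in Hge2.
  unfold cross, psub in *; simpl in *.
  set (e1 := fst (p (nxt n i)) - fst (p i)) in *.
  set (e2 := snd (p (nxt n i)) - snd (p i)) in *.
  set (b1 := fst (p (prv n i)) - fst (p i)) in *.
  set (b2 := snd (p (prv n i)) - snd (p i)) in *.
  assert (Hz : e1 * (snd v - snd (p i)) - e2 * (fst v - fst (p i)) = 0) by lra.
  rewrite E1, E2 in Hz.
  assert (Hbe : be = 0) by nra.
  subst be. rewrite Rmult_0_l, Rplus_0_r in E1, E2.
  exists al. split; [split; auto|].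
  - set (f1 := fst (p (nxt n (nxt n i))) - fst (p (nxt n i))) in *.
    set (f2 := snd (p (nxt n (nxt n i))) - snd (p (nxt n i))) in *.
    assert (Hv1 : fst v - fst (p (nxt n i)) = (al - 1) * e1) by (unfold e1 in *; lra).
    assert (Hv2 : snd v - snd (p (nxt n i)) = (al - 1) * e2) by (unfold e2 in *; lra).
    assert (Hq' : f1 * e2 - f2 * e1 < 0) by (unfold e1, e2; lra).
    rewrite Hv1, Hv2 in Hge2. nra.
  - destruct v as [v1 v2]. unfold comb. simpl in *. f_equal; unfold e1, e2 in *; lra.
Qed.


Lemma sumR_pos m f : (1 <= m)%nat -> (forall i, (i < m)%nat -> 0 < f i) -> 0 < sumR m f.
Proof.
  induction m as [|m IH]; intros Hm Hf; [lia|]. simpl.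
  destruct (Nat.eq_dec m 0) as [E|E].
  - subst. simpl. rewrite Rplus_0_l. apply Hf; lia.
  - assert (0 < sumR m f) by (apply IH; [lia| intros; apply Hf; lia]).
    assert (0 < f m) by (apply Hf; lia). lra.
Qed.

Lemma V_pos A n p w : 0 <= A -> (1 <= n)%nat -> (forall i, (i < n)%nat -> w <> p i) ->
  Vpot A n p w > 0.
Proof.
  intros HA Hn Hw. unfold Vpot.
  assert (0 < sumR n (fun i => 1 / (2 * enorm (psub w (p i))))); [|lra].
  apply sumR_pos; auto. intros i Hi.
  assert (0 < enorm (psub w (p i))).
  { unfold enorm. apply sqrt_lt_R0.
    destruct (Req_dec (fst w) (fst (p i))) as [E1|E1];
    destruct (Req_dec (snd w) (snd (p i))) as [E2|E2].
    - exfalso. apply (Hw i Hi). destruct w, (p i); simpl in *; subst; auto.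
    - simpl. assert (0 < (snd w - snd (p i))^2) by (apply pow2_gt_0; lra).
      pose proof (pow2_ge_0 (fst w - fst (p i))). lra.
    - simpl. assert (0 < (fst w - fst (p i))^2) by (apply pow2_gt_0; lra).
      pose proof (pow2_ge_0 (snd w - snd (p i))). lra.
    - simpl. assert (0 < (fst w - fst (p i))^2) by (apply pow2_gt_0; lra).
      pose proof (pow2_ge_0 (snd w - snd (p i))). lra. }
  apply Rdiv_lt_0_compat; lra.
Qed.

Lemma chain_dir (F : pt -> R) (z d : pt) :
  (exists e, 0 < e /\ forall w, Rabs (fst w - fst z) < e -> Rabs (snd w - snd z) < e ->
      ex_derive (fun t => F (t, snd w)) (fst w)) ->
  ex_derive (fun t => F (fst z, t)) (snd z) ->
  continuous (partial true F) z ->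
  derivable_pt_lim (fun t => F (fst z + t * fst d, snd z + t * snd d)) 0
    (partial true F z * fst d + partial false F z * snd d).
Proof.
  intros [e [He Hloc]] Hy Hc. destruct z as [x y]. simpl in *.
  assert (H1 : locally (x,y) (fun u : R * R => is_derive (fun z => F (z, snd u)) (fst u) (partial true F (fst u, snd u)))).
  { exists (mkposreal e He). intros [a b] [Ha Hb]. simpl. apply Derive_correct.
    apply (Hloc (a,b)); [exact Ha | exact Hb]. }
  assert (H2 : is_derive (fun z => F (x, z)) y (partial false F (x,y))).
  { simpl. apply Derive_correct. exact Hy. }
  assert (H3 : continuous (fun u : R * R => partial true F (fst u, snd u)) (x,y)).
  { replace (fun u : R*R => partial true F (fst u, snd u)) with (partial true F). exact Hc.
    apply functional_extensionality; intros [a b]; reflexivity. }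
  pose proof (is_derive_filterdiff (fun a b => F (a,b)) x y (fun a b => partial true F (a,b)) (partial false F (x,y)) H1 H2 H3) as Hf.
  apply (filterdiff_differentiable_pt_lim (fun a b => F (a,b)) x y (partial true F (x,y)) (partial false F (x,y))) in Hf.
  assert (H0 : differentiable_pt_lim (fun a b => F (a,b)) (x + 0 * fst d) (y + 0 * snd d)
     (partial true F (x,y)) (partial false F (x,y))) by (rewrite !Rmult_0_l, !Rplus_0_r; exact Hf).
  apply (derivable_pt_lim_comp_2d (fun a b => F (a,b)) (fun t => x + t * fst d) (fun t => y + t * snd d) 0 _ _ (fst d) (snd d) H0).
  - apply is_derive_Reals. auto_derive; auto; ring.
  - apply is_derive_Reals. auto_derive; auto; ring.
Qed.

Lemma fermat_min (f : R -> R) (x c : R) : ex_derive f x ->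
  (exists e, 0 < e /\ forall t, Rabs (t - x) < e -> f x - c * x <= f t - c * t) ->
  Derive f x = c.
Proof.
  intros Hd [e [He Hm]].
  assert (Hl : derivable_pt_lim (fun t => f t - c * t) x (Derive f x - c)).
  { apply Derive_correct in Hd. apply is_derive_Reals in Hd.
    assert (Hc : derivable_pt_lim (fun t => c * t) x c).
    { apply is_derive_Reals. auto_derive; auto; ring. }
    exact (derivable_pt_lim_minus f (fun t => c * t) x _ _ Hd Hc). }
  set (pr := exist (fun l => derivable_pt_lim (fun t => f t - c * t) x l) (Derive f x - c) Hl).
  assert (H0 : derive_pt (fun t => f t - c * t) x pr = 0).
  { apply (deriv_minimum _ (x - e) (x + e)); try lra.
    intros t H1 H2. apply Hm. apply Rabs_def1; lra. }
  simpl in H0. lra.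
Qed.

Lemma deriv_convex (h : R -> R) l : derivable_pt_lim h 0 l ->
  (forall t, 0 <= t <= 1 -> h t <= (1 - t) * h 0 + t * h 1) -> l <= h 1 - h 0.
Proof.
  intros Hd Hc. apply Rnot_lt_le; intro Hlt.
  destruct (Hd (l - (h 1 - h 0))) as [del Hdel]; [lra|].
  pose proof (cond_pos del) as Hdp.
  set (t := Rmin (del / 2) (1 / 2)).
  assert (Ht0 : 0 < t) by (apply Rmin_glb_lt; lra).
  assert (Ht1 : t <= 1 / 2) by apply Rmin_r.
  assert (Ht2 : t < del) by (pose proof (Rmin_l (del / 2) (1 / 2)); unfold t in *; lra).
  specialize (Hdel t ltac:(lra) ltac:(rewrite Rabs_pos_eq; lra)).
  rewrite Rplus_0_l in Hdel.
  specialize (Hc t ltac:(lra)).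
  set (q := (h t - h 0) / t) in *.
  assert (Hq : h t - h 0 = q * t) by (unfold q; field; lra).
  assert (q <= h 1 - h 0).
  { apply (Rmult_le_reg_r t); auto. rewrite <- Hq. lra. }
  apply Rabs_def2 in Hdel. lra.
Qed.

Lemma deriv_const_near (k : R -> R) (c e : R) : 0 < e ->
  (forall t, Rabs t < e -> k t = c) -> derivable_pt_lim k 0 0.
Proof.
  intros He Hk eps Heps. exists (mkposreal e He). intros h Hh Hh'. simpl in Hh'.
  rewrite Rplus_0_l, (Hk h Hh'), (Hk 0) by (rewrite Rabs_R0; lra).
  replace ((c - c) / h - 0) with 0 by (field; auto). rewrite Rabs_R0; lra.
Qed.

Lemma within_eps (K : pt -> Prop) (f : pt -> R) u :
  filterlim f (within K (locally u)) (locally (f u)) ->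
  forall eps, 0 < eps -> exists e, 0 < e /\ forall w, K w ->
    Rabs (fst w - fst u) < e -> Rabs (snd w - snd u) < e -> Rabs (f w - f u) < eps.
Proof.
  intros H eps Heps.
  assert (Hl : locally (f u) (ball (f u) eps)) by (exists (mkposreal eps Heps); auto).
  specialize (H _ Hl). destruct H as [e He].
  exists e; split; [apply cond_pos|]. intros w Kw H1 H2.
  apply (He w); [split; [exact H1| exact H2] | exact Kw].
Qed.

Lemma gauge (Q : pt -> R -> Prop) : (forall t, exists e, 0 < e /\ Q t e) ->
  exists delta : pt -> posreal, forall t, Q t (delta t).
Proof.
  intros H.
  exists (fun t => mkposreal (proj1_sig (constructive_indefinite_description _ (H t)))
                     (proj1 (proj2_sig (constructive_indefinite_description _ (H t))))).
  intros t. simpl. destruct (constructive_indefinite_description _ (H t)) as [e [He Hq]]. simpl. exact Hq.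
Qed.

Lemma finite_cover (a b c d : R) (delta : pt -> posreal) :
  exists l : list pt, forall x, a <= fst x <= b -> c <= snd x <= d ->
    exists t, In t l /\ Rabs (fst x - fst t) < delta t /\ Rabs (snd x - snd t) < delta t.
Proof.
  set (tr := fun t : R * (R * unit) => (fst t, fst (snd t))).
  pose proof (compactness_list 2 (a, (c, tt)) (b, (d, tt)) (fun t => delta (tr t))) as H.
  apply NNPP; intro Hn; apply H; intros [l Hl]; apply Hn; clear H Hn.
  exists (map tr l).
  intros [x1 x2] Hx1 Hx2. destruct (Hl (x1, (x2, tt))) as [t [Ht1 [Ht2 Ht3]]].
  { simpl in *; tauto. }
  exists (tr t). split; [apply in_map; exact Ht1|].
  destruct t as [t1 [t2 []]]. simpl in Ht3 |- *. tauto.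
Qed.

Lemma list_lb (l : list pt) (P : pt -> Prop) (f : pt -> R) :
  exists m, forall t, In t l -> P t -> m <= f t.
Proof.
  induction l as [|x l [m Hm]].
  - exists 0; intros t [].
  - exists (Rmin m (f x)). intros t [E|Ht] Pt.
    + subst; apply Rmin_r.
    + eapply Rle_trans; [apply Rmin_l| auto].
Qed.

Lemma list_pos_lb (l : list pt) (P : pt -> Prop) (f : pt -> R) :
  (forall t, P t -> 0 < f t) -> exists e, 0 < e /\ forall t, In t l -> P t -> e <= f t.
Proof.
  intros Hf. induction l as [|x l [e [He Hm]]].
  - exists 1; split; [lra|]; intros t [].
  - destruct (classic (P x)) as [Px|Px].
    + exists (Rmin e (f x)). split; [apply Rmin_glb_lt; auto|].
      intros t [E|Ht] Pt.
      * subst; apply Rmin_r.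
      * eapply Rle_trans; [apply Rmin_l| auto].
    + exists e. split; auto. intros t [E|Ht] Pt; [subst; contradiction| auto].
Qed.

Lemma EVT (K : pt -> Prop) (G : pt -> R) a b c d :
  (forall w, K w -> a <= fst w <= b /\ c <= snd w <= d) ->
  (exists w, K w) ->
  (forall t, ~ K t -> exists e, 0 < e /\ forall w, Rabs (fst w - fst t) < e -> Rabs (snd w - snd t) < e -> ~ K w) ->
  (forall u, K u -> forall eps, 0 < eps -> exists e, 0 < e /\ forall w, K w ->
      Rabs (fst w - fst u) < e -> Rabs (snd w - snd u) < e -> Rabs (G w - G u) < eps) ->
  exists v, K v /\ forall w, K w -> G v <= G w.
Proof.
  intros Hbox [w0 Hw0] Hcl Hcont.
  assert (Hg : forall (r : pt -> R), (forall t, K t -> 0 < r t) ->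
     exists l : list pt, forall w, K w -> exists t, In t l /\ K t /\ Rabs (G w - G t) < r t).
  { intros r Hr.
    destruct (gauge (fun t e => (K t -> forall w, K w -> Rabs (fst w - fst t) < e -> Rabs (snd w - snd t) < e -> Rabs (G w - G t) < r t)
                             /\ (~ K t -> forall w, Rabs (fst w - fst t) < e -> Rabs (snd w - snd t) < e -> ~ K w))) as [delta Hdelta].
    { intros t. destruct (classic (K t)) as [Kt|Kt].
      - destruct (Hcont t Kt (r t) (Hr t Kt)) as [e [He Hq]]. exists e. refine (conj He (conj (fun _ => Hq) _)). intros; contradiction.
      - destruct (Hcl t Kt) as [e [He Hq]]. exists e. refine (conj He (conj _ (fun _ => Hq))). intros; contradiction. }
    destruct (finite_cover a b c d delta) as [l Hl]. exists l. intros w Kw.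
    destruct (Hbox w Kw) as [B1 B2]. destruct (Hl w B1 B2) as [t [Ht [C1 C2]]].
    exists t. split; auto. destruct (classic (K t)) as [Kt|Kt].
    - split; auto. apply (proj1 (Hdelta t)); auto.
    - exfalso. apply (proj2 (Hdelta t) Kt w C1 C2 Kw). }
  destruct (Hg (fun _ => 1)) as [l1 Hl1]; [intros; lra|].
  destruct (list_lb l1 K G) as [m0 Hm0].
  set (E := fun r => exists w, K w /\ r = - G w).
  assert (HE : bound E).
  { exists (1 - m0). intros r [w [Kw ->]]. destruct (Hl1 w Kw) as [t [Ht [Kt Hwt]]].
    specialize (Hm0 t Ht Kt). apply Rabs_def2 in Hwt. lra. }
  destruct (completeness E HE (ex_intro _ (- G w0) (ex_intro _ w0 (conj Hw0 eq_refl)))) as [M [HM1 HM2]].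
  assert (Hlow : forall w, K w -> - M <= G w).
  { intros w Kw. assert (- G w <= M) by (apply HM1; exists w; auto). lra. }
  assert (Happ : forall e, 0 < e -> exists w, K w /\ G w < - M + e).
  { intros e He. apply NNPP; intro Hn.
    assert (M <= M - e); [|lra]. apply HM2. intros r [w [Kw ->]].
    apply Rnot_lt_le. intro Hlt. apply Hn. exists w. split; auto. lra. }
  apply NNPP; intro Hno.
  assert (Hgt : forall v, K v -> - M < G v).
  { intros v Kv. destruct (Rle_lt_or_eq_dec _ _ (Hlow v Kv)) as [L|Eq]; auto.
    exfalso. apply Hno. exists v. split; auto. intros w Kw. rewrite <- Eq. auto. }
  destruct (Hg (fun t => (G t + M) / 2)) as [l2 Hl2].
  { intros t Kt. specialize (Hgt t Kt). lra. }
  destruct (list_pos_lb l2 K (fun t => (G t + M) / 2)) as [e0 [He0 Hle0]].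
  { intros t Kt. specialize (Hgt t Kt). lra. }
  destruct (Happ e0 He0) as [w [Kw Hw]].
  destruct (Hl2 w Kw) as [t [Ht [Kt Hwt]]]. specialize (Hle0 t Ht Kt).
  apply Rabs_def2 in Hwt. lra.
Qed.

Lemma comb0 (a b : pt) : comb 0 a b = a.
Proof. destruct a as [a1 a2]; unfold comb; simpl; f_equal; ring. Qed.
Lemma comb1 (a b : pt) : comb 1 a b = b.
Proof. destruct b as [b1 b2]; unfold comb; simpl; f_equal; ring. Qed.
Lemma comb_eq t (u q : pt) : comb t u q = (fst u + t * fst (psub q u), snd u + t * snd (psub q u)).
Proof. unfold comb, psub; simpl; f_equal; ring. Qed.

Lemma grad_at_min n p phi y v : poly_int n p v -> smooth_on (poly_int n p) phi ->
  (forall w, poly_cl n p w -> phi v - dot y v <= phi w - dot y w) -> grad phi v = y.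
Proof.
  intros Hv Hs Hm. destruct (int_open n p v Hv) as [e [He Ho]].
  destruct (Hs nil v Hv) as [D1 [D2 _]]. simpl in D1, D2.
  destruct v as [v1 v2]; destruct y as [y1 y2]. unfold grad, partial; simpl in *. f_equal.
  - apply fermat_min; auto. exists e; split; auto. intros t Ht.
    assert (Hw : poly_int n p (t, v2)).
    { apply Ho; simpl; auto. replace (v2 - v2) with 0 by ring. rewrite Rabs_R0; auto. }
    specialize (Hm (t, v2) (int_cl _ _ _ Hw)). unfold dot in Hm; simpl in Hm. lra.
  - apply fermat_min; auto. exists e; split; auto. intros t Ht.
    assert (Hw : poly_int n p (v1, t)).
    { apply Ho; simpl; auto. replace (v1 - v1) with 0 by ring. rewrite Rabs_R0; auto. }
    specialize (Hm (v1, t) (int_cl _ _ _ Hw)). unfold dot in Hm; simpl in Hm. lra.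
Qed.

Lemma G_cont (K : pt -> Prop) (phi : pt -> R) (y u : pt) :
  filterlim phi (within K (locally u)) (locally (phi u)) ->
  forall eps, 0 < eps -> exists e, 0 < e /\ forall w, K w ->
    Rabs (fst w - fst u) < e -> Rabs (snd w - snd u) < e ->
    Rabs ((phi w - dot y w) - (phi u - dot y u)) < eps.
Proof.
  intros H eps Heps.
  destruct (within_eps K phi u H (eps / 2)) as [e1 [He1 Hq]]; [lra|].
  set (E := (snd y, - fst y)).
  set (S0 := Rabs (fst E) + Rabs (snd E)).
  assert (HS : 0 <= S0) by (unfold S0; pose proof (Rabs_pos (fst E)); pose proof (Rabs_pos (snd E)); lra).
  set (x := eps / 2 / (S0 + 1)).
  assert (Hx : 0 < x) by (unfold x; apply Rdiv_lt_0_compat; lra).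
  assert (Hx2 : S0 * x <= eps / 2).
  { replace (eps / 2) with (x * (S0 + 1)) by (unfold x; field; lra). nra. }
  exists (Rmin e1 x). split; [apply Rmin_glb_lt; auto|].
  intros w Kw H1 H2.
  assert (L1 : Rabs (fst w - fst u) < e1) by (eapply Rlt_le_trans; [exact H1| apply Rmin_l]).
  assert (L2 : Rabs (snd w - snd u) < e1) by (eapply Rlt_le_trans; [exact H2| apply Rmin_l]).
  assert (M1 : Rabs (fst w - fst u) < x) by (eapply Rlt_le_trans; [exact H1| apply Rmin_r]).
  assert (M2 : Rabs (snd w - snd u) < x) by (eapply Rlt_le_trans; [exact H2| apply Rmin_r]).
  specialize (Hq w Kw L1 L2).
  pose proof (cross_pert E (0,0) w u x M1 M2) as Hp. fold S0 in Hp.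
  replace (cross E (psub w (0, 0)) - cross E (psub u (0, 0))) with (dot y w - dot y u) in Hp
    by (unfold E, cross, psub, dot; simpl; ring).
  replace (phi w - dot y w - (phi u - dot y u)) with ((phi w - phi u) + - (dot y w - dot y u)) by ring.
  eapply Rle_lt_trans; [apply Rabs_triang|]. rewrite Rabs_Ropp. lra.
Qed.

Theorem mainTheorem7 (n : nat) (p : nat -> pt) (A : R) (b : nat -> R)
  (phi : pt -> R) :
  (3 <= n)%nat ->
  ccw_convex_polygon n p ->
  0 <= A ->
  cont_within_on (poly_cl n p) phi ->
  convex_on (poly_cl n p) phi ->
  smooth_on (poly_int n p) phi ->
  (forall u, poly_int n p u -> hess_det phi u = Vpot A n p u) ->
  (forall i, (i < n)%nat -> phi (p i) = b i) ->
  (forall i, (i < n)%nat -> affine_on_segment phi (p i) (vert p n (S i))) ->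
  forall y : pt,
    (exists u, poly_int n p u /\ grad phi u = y) <->
    ~ (exists i, (i < n)%nat /\ subgrad (poly_cl n p) phi (p i) y).
Proof.
  intros Hn Hp HA Hcont Hconv Hs Hdet Hb Haff y.
  set (G := fun v => phi v - dot y v).
  assert (Hsub : forall i, subgrad (poly_cl n p) phi (p i) y <-> forall w, poly_cl n p w -> G (p i) <= G w).
  { intros i; split; intros H w Hw; specialize (H w Hw); unfold G, dot, psub in *; simpl in *; lra. }
  split.
  - intros [u [Hu Hg]] [i [Hi Hsg]]. pose proof (proj1 (Hsub i) Hsg) as Hsg0; clear Hsg; rename Hsg0 into Hsg.
    assert (Kpi := vert_cl n p i Hn Hp Hi). assert (Ku := int_cl _ _ _ Hu).
    set (q := p i) in *.
    set (d := psub q u).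
    assert (Py1 : partial true phi u = fst y) by (rewrite <- Hg; reflexivity).
    assert (Py2 : partial false phi u = snd y) by (rewrite <- Hg; reflexivity).
    assert (Hd1 : derivable_pt_lim (fun t => phi (comb t u q)) 0 (partial true phi u * fst d + partial false phi u * snd d)).
    { replace (fun t => phi (comb t u q)) with (fun t => phi (fst u + t * fst d, snd u + t * snd d))
        by (apply functional_extensionality; intros t; rewrite comb_eq; reflexivity).
      destruct (int_open n p u Hu) as [e [He Ho]]. apply (chain_dir phi u d).
      - exists e; split; auto. intros w H1 H2. exact (proj1 (Hs nil w (Ho w H1 H2))).
      - exact (proj1 (proj2 (Hs nil u Hu))).
      - exact (proj2 (proj2 (Hs (true :: nil) u Hu))). }
    assert (Hcv : forall t, 0 <= t <= 1 -> phi (comb t u q) <= (1 - t) * phi (comb 0 u q) + t * phi (comb 1 u q)).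
    { intros t Ht. rewrite comb0, comb1. apply Hconv; auto. }
    pose proof (deriv_convex _ _ Hd1 Hcv) as Hle. cbv beta in Hle. rewrite comb0, comb1, Py1, Py2 in Hle.
    assert (HGu : G u <= G q) by (unfold G, d, dot, psub in *; simpl in *; lra).
    assert (Hmin : forall s, 0 <= s <= 1 -> forall w, poly_cl n p w -> G (comb s u q) <= G w).
    { intros s Hs1 w Kw. specialize (Hsg w Kw).
      pose proof (Hconv u q s Ku Kpi Hs1) as Hc.
      assert (Hdy : dot y (comb s u q) = (1 - s) * dot y u + s * dot y q)
        by (unfold dot, comb; simpl; ring).
      assert ((1 - s) * (G u - G q) <= 0) by (apply Rmult_le_0_l; lra).
      unfold G in *. rewrite Hdy. lra. }
    set (w := comb (1/2) u q).
    assert (Hw : poly_int n p w) by (apply int_comb; auto; lra).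
    set (Ppt := fun t => (fst w + t * fst d, snd w + t * snd d)).
    assert (HP : forall t, Ppt t = comb (1/2 + t) u q)
      by (intros t; unfold Ppt, w, d, comb, psub; simpl; f_equal; field).
    assert (Hgr : forall t, Rabs t < 1/2 -> grad phi (Ppt t) = y).
    { intros t Ht. apply Rabs_def2 in Ht. rewrite HP. apply (grad_at_min n p).
      - apply int_comb; auto; lra.
      - exact Hs.
      - intros v Kv. exact (Hmin (1/2 + t) ltac:(lra) v Kv). }
    destruct (int_open n p w Hw) as [e [He Ho]].
    assert (E1 : partial true (partial true phi) w * fst d + partial false (partial true phi) w * snd d = 0).
    { apply (uniqueness_limite (fun t => partial true phi (Ppt t)) 0).
      - apply (chain_dir (partial true phi) w d).
        + exists e; split; auto. intros v H1 H2. exact (proj1 (Hs (true :: nil) v (Ho v H1 H2))).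
        + exact (proj1 (proj2 (Hs (true :: nil) w Hw))).
        + exact (proj2 (proj2 (Hs (true :: true :: nil) w Hw))).
      - apply (deriv_const_near _ (fst y) (1/2)); [lra|].
        intros t Ht. rewrite <- (Hgr t Ht). reflexivity. }
    assert (E2 : partial true (partial false phi) w * fst d + partial false (partial false phi) w * snd d = 0).
    { apply (uniqueness_limite (fun t => partial false phi (Ppt t)) 0).
      - apply (chain_dir (partial false phi) w d).
        + exists e; split; auto. intros v H1 H2. exact (proj1 (Hs (false :: nil) v (Ho v H1 H2))).
        + exact (proj1 (proj2 (Hs (false :: nil) w Hw))).
        + exact (proj2 (proj2 (Hs (true :: false :: nil) w Hw))).
      - apply (deriv_const_near _ (snd y) (1/2)); [lra|].
        intros t Ht. rewrite <- (Hgr t Ht). reflexivity. }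
    assert (HV : Vpot A n p w > 0).
    { apply V_pos; auto; [lia|]. intros j Hj. apply (int_not_vert n p); auto. }
    rewrite <- (Hdet w Hw) in HV. unfold hess_det in HV.
    set (P11 := partial true (partial true phi) w) in *.
    set (P22 := partial false (partial false phi) w) in *.
    set (P12 := partial true (partial false phi) w) in *.
    set (P21 := partial false (partial true phi) w) in *.
    assert (Q1 : (P11 * P22 - P12 * P21) * fst d = P22 * (P11 * fst d + P21 * snd d) - P21 * (P12 * fst d + P22 * snd d)) by ring.
    assert (Q2 : (P11 * P22 - P12 * P21) * snd d = P11 * (P12 * fst d + P22 * snd d) - P12 * (P11 * fst d + P21 * snd d)) by ring.
    rewrite E1, E2 in Q1, Q2. rewrite !Rmult_0_r in Q1, Q2. rewrite Rminus_0_r in Q1, Q2.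
    assert (Hne : u <> q) by (apply (int_not_vert n p); auto).
    apply Hne. destruct (Rmult_integral _ _ Q1) as [Z1|Z1]; [lra|].
    destruct (Rmult_integral _ _ Q2) as [Z2|Z2]; [lra|].
    unfold d, psub in Z1, Z2; simpl in Z1, Z2. destruct u as [u1 u2]. destruct q as [q1 q2].
    simpl in *. f_equal; lra.
  - intros Hno.
    destruct (cl_box n p Hn Hp) as [a [b0 [c [d Hbox]]]].
    destruct (EVT (poly_cl n p) G a b0 c d Hbox) as [v [Kv Hv]].
    + exists (p 0%nat). apply vert_cl; auto; lia.
    + apply cl_closed.
    + intros u Ku. apply (G_cont (poly_cl n p) phi y u (Hcont u Ku)).
    + destruct (classic (poly_int n p v)) as [Iv|Iv].
      * exists v. split; auto. apply (grad_at_min n p); auto.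
      * exfalso. unfold poly_int in Iv. apply not_all_ex_not in Iv. destruct Iv as [i Hi].
        apply imply_to_and in Hi. destruct Hi as [Hi Hx].
        destruct (on_edge n p i v Hn Hp Hi Kv Hx) as [t [Ht Ev]].
        destruct (Haff i Hi) as [c0 [d0 Haf]].
        change (vert p n (S i)) with (p (nxt n i)) in Haf.
        pose proof (Haf 0 ltac:(lra)) as A0. pose proof (Haf 1 ltac:(lra)) as A1.
        pose proof (Haf t Ht) as At. rewrite <- Ev in At. rewrite comb0 in A0. rewrite comb1 in A1.
        assert (HGv : G v = (1 - t) * G (p i) + t * G (p (nxt n i))).
        { unfold G. rewrite At, A0, A1, Ev. unfold dot, comb; simpl. ring. }
        assert (Hj : (nxt n i < n)%nat) by (apply nxt_lt; auto).
        assert (V1 := Hv (p i) (vert_cl n p i Hn Hp Hi)).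
        assert (V2 := Hv (p (nxt n i)) (vert_cl n p _ Hn Hp Hj)).
        destruct (Req_dec t 1) as [T1|T1].
        -- apply Hno. exists (nxt n i). split; auto. apply (proj2 (Hsub _)). intros w Kw.
           assert (G (p (nxt n i)) = G v) by (rewrite HGv, T1; ring).
           specialize (Hv w Kw). lra.
        -- apply Hno. exists i. split; auto. apply (proj2 (Hsub _)). intros w Kw.
           assert (G (p i) = G v).
           { assert (0 < 1 - t) by lra.
             assert (0 <= t * (G (p (nxt n i)) - G v)) by (apply Rmult_le_pos; lra).
             assert (0 <= (1 - t) * (G (p i) - G v)) by (apply Rmult_le_pos; lra).
             assert ((1 - t) * (G (p i) - G v) = 0) by nra.
             destruct (Rmult_integral _ _ H2); lra. }
           specialize (Hv w Kw). lra.
Qed.
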